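(* Fix a round $t$ and a bid $b\in[0,1]$. Let $m_t$ have CDF $G$ and be independent of the outcomes $(v_{t,1},v_{t,0})\in[0,1]^2$, where $\mathbb{E}[v_{t,1}-v_{t,0}]=\theta_*^\top x_t$. Let $\widehat G_t$ be a function with $\widehat G_t(b)\in(0,1)$, fixed (i.e. not random, or independent of $(m_t,v_{t,1},v_{t,0})$), satisfying $|\widehat G_t(b)-G(b)|\le u_t(b)$. Define \[ \widetilde e_t(b)=\frac{\mathbb{1}[b\ge m_t]\,v_{t,1}}{\widehat G_t(b)}-\frac{\mathbb{1}[b<m_t]\,v_{t,0}}{1-\widehat G_t(b)},\qquad \sigma_t(b)=\frac{1}{\widehat G_t(b)\,(1-\widehat G_t(b))}. \] Then with $c_0=4$, \[ \left|\mathbb{E}[\widetilde e_t(b)]-\theta_*^\top x_t\right|\le c_0\,u_t(b)\,\sigma_t(b)\quad\text{and}\quad \mathrm{Var}(\widetilde e_t(b))\le c_0\,\sigma_t(b)^2. \]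
   Context: Context: second-price auction round with context $x_t\in\mathbb{R}^d$, bid $b$, highest other bid $m_t$ with CDF $G$ (win iff $b\ge m_t$), winning outcome $v_{t,1}$ and baseline outcome $v_{t,0}$; $\theta_*\in\mathbb{R}^d$ is the linear treatment-effect parameter. $\widetilde e_t(b)$ is an inverse-propensity-weighted estimator of the treatment effect $v_{t,1}-v_{t,0}$ using an estimated propensity $\widehat G_t(b)$. *)

(* Defs.v *)
From HB Require Import structures.
From mathcomp Require Import all_boot all_order all_algebra.
From mathcomp Require Import all_classical all_reals all_analysis.
Set Implicit Arguments. Unset Strict Implicit. Unset Printing Implicit Defensive.
Import Order.TTheory GRing.Theory Num.Theory.
Local Open Scope classical_set_scope.
Local Open Scope ring_scope.

Definition indep_rv_pair d (T : measurableType d) (R : realType)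
  (P : probability T R) (m v1 v0 : T -> R) : Prop :=
  forall (A : set R) (B : set (R * R)%type), measurable A -> measurable B ->
    P (m @^-1` A `&` (fun w => (v1 w, v0 w)) @^-1` B) =
    (P (m @^-1` A) * P ((fun w => (v1 w, v0 w)) @^-1` B))%E.

Definition ipw_est d (T : measurableType d) (R : realType)
  (gh b : R) (m v1 v0 : T -> R) : T -> R :=
  fun w => ((nat_of_bool (m w <= b)%R)%:R * v1 w) / gh
           - ((nat_of_bool (b < m w)%R)%:R * v0 w) / (1 - gh).

Definition sigma_t (R : realType) (gh : R) : R := (gh * (1 - gh))^-1.

(* Main.v *)
Require Import Defs.
From HB Require Import structures.
From mathcomp Require Import all_boot all_order all_algebra.
From mathcomp Require Import all_classical all_reals all_analysis.
From mathcomp Require Import measurable_realfun.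
From mathcomp Require Import ring lra.
Import Order.TTheory GRing.Theory Num.Theory.
Local Open Scope classical_set_scope.
Local Open Scope ring_scope.

Section S.
Context d (T : measurableType d) (R : realType) (P : probability T R).
Local Open Scope ereal_scope.

Lemma indep_mul (D : set T) (mD : measurable D) (f : T -> R)
  (mf : measurable_fun setT f) (f0 : forall w, (0 <= f w)%R)
  (hind : forall r, P (D `&` f @^-1` `]r,+oo[) = P D * P (f @^-1` `]r,+oo[)) :
 'E_P[fun w => \1_D w * f w]%R = P D * 'E_P[f].
Proof.
pose X : {RV P >-> R} := HB.pack f (isMeasurableFun.Build _ _ _ _ _ mf).
have mg : measurable_fun setT (fun w => \1_D w * f w)%R.
  apply: measurable_funM => //; exact: measurable_indic.
pose Y : {RV P >-> R} := HB.pack (fun w => \1_D w * f w)%R (isMeasurableFun.Build _ _ _ _ _ mg).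
have -> : 'E_P[f] = 'E_P[X] by [].
have -> : 'E_P[fun w => \1_D w * f w]%R = 'E_P[Y] by [].
rewrite (@ge0_expectation_ccdf _ _ _ P X)// (@ge0_expectation_ccdf _ _ _ P Y)//; last first.
  by move=> w /=; rewrite mulr_ge0.
transitivity (\int[lebesgue_measure]_(r in `[0%R, +oo[) (P D * ccdf X r)); last first.
  apply: ge0_integralZl => //.
  exact: (measurable_funTS (ccdf_measurable X)).
apply: eq_integral => r; rewrite inE /= in_itv /= andbT => r0.
rewrite /ccdf /= -hind; congr (P _).
apply/seteqP; split => w /=; rewrite !in_itv/= !andbT indicE.
  case: (boolP (w \in D)) => [/set_mem wD|wD]; first by rewrite mul1r.
  by rewrite mul0r => /(le_lt_trans r0); rewrite ltxx.
by move=> [/mem_set -> h]; rewrite mul1r.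
Qed.

Lemma Lfun1_bd (f : T -> R) (M : R) : measurable_fun setT f ->
  (forall w, `|f w| <= M)%R -> f \in Lfun P 1.
Proof.
move=> mf fM; apply/Lfun1_integrable; apply: measurable_bounded_integrable => //.
  exact: (le_lt_trans (probability_le1 P measurableT) (ltry _)).
exists M; split; first exact: num_real.
move=> y My x _; apply: le_trans (fM x) (ltW My).
Qed.

Lemma exp_01 (f : T -> R) : measurable_fun setT f -> (forall w, 0 <= f w <= 1)%R ->
  exists a : R, 'E_P[f] = a%:E /\ (0 <= a <= 1)%R.
Proof.
move=> mf f01.
have f1 : f \in Lfun P 1.
  apply: (@Lfun1_bd _ 1) => // w; have /andP[h1 h2] := f01 w.
  by rewrite ger0_norm.
have f0 w : (0 <= f w)%R by case/andP: (f01 w).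
have h0 := expectation_ge0 P f0.
have h1 : 'E_P[f] <= 'E_P[cst 1%R].
  apply: expectation_le => //.
  by apply: aeW => w; case/andP: (f01 w).
rewrite expectation_cst in h1.
have := expectation_fin_num f1.
case E: 'E_P[f] => [a| |] //; rewrite E in h0 h1 => _.
by exists a; rewrite -!lee_fin h0 h1.
Qed.
End S.

Local Open Scope ring_scope.
Theorem lemma2 (d : measure_display) (T : measurableType d) (R : realType)
  (P : probability T R) (n : nat) (theta x : 'cV[R]_n)
  (G : R -> R) (m v1 v0 : T -> R) (gh u b : R) :
  0 <= b <= 1 ->
  measurable_fun setT m -> measurable_fun setT v1 -> measurable_fun setT v0 ->
  (forall r : R, (G r)%:E = P [set w | m w <= r]) ->
  indep_rv_pair P m v1 v0 ->
  (forall w, 0 <= v1 w <= 1) -> (forall w, 0 <= v0 w <= 1) ->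
  ('E_P[fun w => (v1 w - v0 w)%R] = ((theta^T *m x) 0 0)%:E)%E ->
  0 < gh < 1 ->
  `|gh - G b| <= u ->
  (`| 'E_P[ipw_est gh b m v1 v0] - ((theta^T *m x) 0 0)%:E |
      <= (4 * u * sigma_t gh)%:E)%E /\
  (variance P (ipw_est gh b m v1 v0) <= (4 * sigma_t gh ^+ 2)%:E)%E.
Proof.
move=> _ mm mv1 mv0 hG hind v1b v0b hth /andP[g0 g1] hu.
set th := (theta^T *m x) 0 0.
set D1 := [set w | m w <= b].
set D0 := [set w | b < m w].
have eD1 : m @^-1` `]-oo, b] = D1 by apply/seteqP; split => w /=; rewrite in_itv.
have eD0 : m @^-1` `]b, +oo[ = D0 by apply/seteqP; split => w /=; rewrite in_itv /= andbT.
have mD1 : measurable D1 by rewrite -eD1 -(setTI (_ @^-1` _)); exact: (mm measurableT _ (measurable_itv _)).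
have mD0 : measurable D0 by rewrite -eD0 -(setTI (_ @^-1` _)); exact: (mm measurableT _ (measurable_itv _)).
have cD0 : D0 = ~` D1.
  apply/seteqP; split => w /=; rewrite /D0 /D1 /=.
    by rewrite ltNge => /negP.
  by move=> /negP; rewrite -ltNge.
set p := G b.
have PD1 : P D1 = p%:E by rewrite hG.
have PD0 : P D0 = (1 - p)%:E by rewrite cD0 probability_setC // PD1.
have p0 : 0 <= p by rewrite -lee_fin -PD1 measure_ge0.
have p1 : p <= 1 by rewrite -lee_fin -PD1 probability_le1.
have ind1 (A : set R) : measurable A -> forall r, 
    P (m @^-1` A `&` v1 @^-1` `]r, +oo[) = (P (m @^-1` A) * P (v1 @^-1` `]r, +oo[))%E.
  move=> mA r; have := hind A (`]r, +oo[ `*` setT) mA (measurableX (measurable_itv _) measurableT).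
  have -> // : (fun w => (v1 w, v0 w)) @^-1` (`]r, +oo[ `*` setT) = v1 @^-1` `]r, +oo[.
  by apply/seteqP; split => w /= //; case.
have ind0 (A : set R) : measurable A -> forall r, 
    P (m @^-1` A `&` v0 @^-1` `]r, +oo[) = (P (m @^-1` A) * P (v0 @^-1` `]r, +oo[))%E.
  move=> mA r; have := hind A (setT `*` `]r, +oo[) mA (measurableX measurableT (measurable_itv _)).
  have -> // : (fun w => (v1 w, v0 w)) @^-1` (setT `*` `]r, +oo[) = v0 @^-1` `]r, +oo[.
  by apply/seteqP; split => w /= //; case.
have E1 : ('E_P[fun w => (\1_D1 w * v1 w)%R] = p%:E * 'E_P[v1])%E.
  rewrite -PD1; apply: indep_mul => //; first by move=> w; case/andP: (v1b w).
  by move=> r; rewrite -eD1; apply: ind1; exact: measurable_itv.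
have E0 : ('E_P[fun w => (\1_D0 w * v0 w)%R] = (1 - p)%:E * 'E_P[v0])%E.
  rewrite -PD0; apply: indep_mul => //; first by move=> w; case/andP: (v0b w).
  by move=> r; rewrite -eD0; apply: ind0; exact: measurable_itv.
have [a [Ea a01]] := @exp_01 _ _ _ P v1 mv1 v1b.
have [c [Ec c01]] := @exp_01 _ _ _ P v0 mv0 v0b.
have L1 : v1 \in Lfun P 1.
  apply: (@Lfun1_bd _ _ _ P v1 1 mv1) => w; case/andP: (v1b w) => ? ?; by rewrite ger0_norm.
have L0 : v0 \in Lfun P 1.
  apply: (@Lfun1_bd _ _ _ P v0 1 mv0) => w; case/andP: (v0b w) => ? ?; by rewrite ger0_norm.
have eth : th = a - c.
  apply: EFin_inj; rewrite -hth EFinB -Ea -Ec.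
  exact: (@expectationB _ _ _ P v1 v0 L1 L0).
have iD1 w : (w \in D1) = (m w <= b) by apply/idP/idP => [/set_mem|/mem_set].
have iD0 w : (w \in D0) = (b < m w) by apply/idP/idP => [/set_mem|/mem_set].
have mf1 : measurable_fun setT (fun w => \1_D1 w * v1 w).
  by apply: measurable_funM => //; exact: measurable_indic.
have mf0 : measurable_fun setT (fun w => \1_D0 w * v0 w).
  by apply: measurable_funM => //; exact: measurable_indic.
have Lf1 : (fun w => \1_D1 w * v1 w) \in Lfun P 1.
  apply: (@Lfun1_bd _ _ _ P _ 1 mf1) => w; rewrite indicE.
  case/andP: (v1b w) => ? ?; case: (w \in D1); rewrite /= ?mul1r ?mul0r ?normr0 //.
  by rewrite ger0_norm.
have Lf0 : (fun w => \1_D0 w * v0 w) \in Lfun P 1.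
  apply: (@Lfun1_bd _ _ _ P _ 1 mf0) => w; rewrite indicE.
  case/andP: (v0b w) => ? ?; case: (w \in D0); rewrite /= ?mul1r ?mul0r ?normr0 //.
  by rewrite ger0_norm.
set ig := gh^-1.
set ih := (1 - gh)^-1.
have ig0 : 0 < ig by rewrite invr_gt0.
have ih0 : 0 < ih by rewrite invr_gt0 subr_gt0.
have esig : sigma_t gh = ig + ih.
  rewrite /sigma_t /ig /ih; field.
  by apply/andP; split; [rewrite subr_eq0 gt_eqF | rewrite gt_eqF].
have eb w : - ih <= ipw_est gh b m v1 v0 w <= ig.
  rewrite /ipw_est -/ig -/ih.
  case/andP: (v1b w) => ? ?; case/andP: (v0b w) => ? ?.
  case: (leP (m w) b) => /= _; rewrite ?mul1r ?mul0r ?subr0 ?sub0r.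
    by apply/andP; split; nra.
  by apply/andP; split; nra.
have eE : ipw_est gh b m v1 v0 =
    (ig \o* (fun w => \1_D1 w * v1 w)) \- (ih \o* (fun w => \1_D0 w * v0 w)).
  apply/funext => w; rewrite /ipw_est /= !indicE iD1 iD0 -/ig -/ih.
  by [].
have EE : ('E_P[ipw_est gh b m v1 v0] = (ig * (p * a) - ih * ((1 - p) * c))%:E)%E.
  rewrite eE expectationB; last 2 first.
  - exact: Lfun_scale.
  - exact: Lfun_scale.
  rewrite !expectationZl // E1 E0 Ea Ec.
  by rewrite -!EFinM -EFinB.
have pa01 : 0 <= p * a <= 1 by case/andP: a01 => ? ?; apply/andP; split; nra.
have pc01 : 0 <= (1 - p) * c <= 1 by case/andP: c01 => ? ?; apply/andP; split; nra.
split.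
  rewrite EE eth -EFinB abse_EFin lee_fin esig.
  have key : ig * (p * a) - ih * ((1 - p) * c) - (a - c) = (p - gh) * (a * ig + c * ih).
    rewrite /ig /ih; field.
    by apply/andP; split; [rewrite subr_eq0 gt_eqF | rewrite gt_eqF].
  have hu' : `|p - gh| <= u by rewrite distrC.
  have u0 : 0 <= u by apply: le_trans hu'.
  case/andP: a01 => ? ?; case/andP: c01 => ? ?.
  have s0 : 0 <= a * ig + c * ih by nra.
  rewrite key normrM (ger0_norm s0).
  apply: le_trans (ler_wpM2r s0 hu') _.
  have t1 : a * ig + c * ih <= ig + ih by nra.
  apply: le_trans (ler_wpM2l u0 t1) _.
  have : 0 <= u * (ig + ih) by apply: mulr_ge0 => //; lra.
  nra.
rewrite /variance covariance.unlock EE /=.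
rewrite -(expectation_cst P (4 * sigma_t gh ^+ 2)).
have me : measurable_fun setT (ipw_est gh b m v1 v0).
  rewrite eE; apply: measurable_funB; exact: measurable_funM.
apply: expectation_le => //.
- by apply: measurable_funM; apply: measurable_funB.
- by move=> w /=; rewrite -expr2 sqr_ge0.
- move=> w /=; rewrite esig; nra.
apply: aeW => w /=.
have := eb w; set e := ipw_est _ _ _ _ _ w => /andP[e1 e2].
case/andP: pa01 => ? ?; case/andP: pc01 => ? ?.
rewrite esig.
have h1 : 0 <= ig + ih - (e - (ig * (p * a) - ih * ((1 - p) * c))) by nra.
have h2 : 0 <= ig + ih + (e - (ig * (p * a) - ih * ((1 - p) * c))) by nra.
have := mulr_ge0 h1 h2.
set mu := ig * (p * a) - ih * ((1 - p) * c).
move=> H; change ((e - mu) * (e - mu) <= 4 * (ig + ih) ^+ 2).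
nra.
Qed.
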